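(* Let $\pi_2=2\int_0^1\frac{\mathrm{d}t}{\sqrt{1-t^4}}$ and let $\mathrm{sleaf}_2:\mathbb{R}\to\mathbb{R}$ be the leaf function of basis $2$. Let $m$ be an integer, let $l$ be real with $s:=\mathrm{sleaf}_2(l)\neq0$. (i) If $\frac{\pi_2}{2}(4m+1)\le l\le\frac{\pi_2}{2}(4m+3)$, then $$\Bigl(\mathrm{sleaf}_2\Bigl(\frac l2\Bigr)\Bigr)^2=\frac{-1-\sqrt{1-s^2}}{s^2}+\frac{\sqrt{1+s^2}}{s^2}\sqrt{2-s^2+2\sqrt{1-s^2}}.$$ (ii) If $\frac{\pi_2}{2}(4m-1)\le l\le\frac{\pi_2}{2}(4m+1)$, then $$\Bigl(\mathrm{sleaf}_2\Bigl(\frac l2\Bigr)\Bigr)^2=\frac{-1+\sqrt{1-s^2}}{s^2}+\frac{\sqrt{1+s^2}}{s^2}\sqrt{2-s^2-2\sqrt{1-s^2}}.$$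
   Context: For a natural number $n$, the leaf function $\mathrm{sleaf}_n:\mathbb{R}\to\mathbb{R}$ is the solution of $\frac{\mathrm{d}^2r}{\mathrm{d}l^2}=-n\,r^{2n-1}$ with $r(0)=0$, $r'(0)=1$; it is periodic with period $2\pi_n$, where $\pi_n=2\int_0^1\frac{\mathrm{d}t}{\sqrt{1-t^{2n}}}$, and on $[-\pi_n/2,\pi_n/2]$ it is the inverse of $r\mapsto\int_0^r\frac{\mathrm{d}t}{\sqrt{1-t^{2n}}}$. *)

(* Defs.v *)
From Stdlib Require Import Reals.
From Coquelicot Require Import Coquelicot.
Open Scope R_scope.

(* pi_n = 2 * \int_0^1 dt / sqrt(1 - t^(2n)), an improper Riemann integral
   (the integrand is unbounded at t = 1), taken as the limit at 1^- . *)
Definition pi_n (n : nat) : R :=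
  2 * RInt_gen (fun t : R => / sqrt (1 - t ^ (2 * n))) (at_point 0) (at_left 1).

(* r is the leaf function sleaf_n: the solution of r'' = - n r^(2n-1),
   r(0) = 0, r'(0) = 1 (unique by Cauchy-Lipschitz). *)
Definition is_sleaf (n : nat) (r : R -> R) : Prop :=
  exists r' : R -> R,
    (forall x, is_derive r x (r' x)) /\
    (forall x, is_derive r' x (- INR n * r x ^ (2 * n - 1))) /\
    r 0 = 0 /\ r' 0 = 1.

(* Main.v *)
Require Import Defs.
From Stdlib Require Import Reals Lra Psatz Classical ZArith Lia.
From Coquelicot Require Import Coquelicot.
Open Scope R_scope.

Lemma Dfun (f f' : R -> R) : (forall x, is_derive f x (f' x)) ->
  forall x, Derive (fun t => f t) x = f' x.
Proof. intros H x. apply is_derive_unique. apply H. Qed.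

Lemma exd (f f' : R -> R) : (forall x, is_derive f x (f' x)) ->
  forall x, ex_derive (fun t => f t) x.
Proof. intros H x. exists (f' x). apply H. Qed.

Lemma mvt (f f' : R -> R) a b : (forall x, is_derive f x (f' x)) -> a < b ->
  exists c, a < c < b /\ f b - f a = f' c * (b - a).
Proof.
  intros H Hab. destruct (MVT_cor2 f f' a b Hab) as [c [H1 H2]].
  - intros c _. apply is_derive_Reals. apply H.
  - exists c. split; auto.
Qed.

Lemma ode_uniq (a M x0 : R) (y1 p1 y2 p2 : R -> R) :
  0 <= a -> 0 <= M ->
  (forall x, is_derive y1 x (p1 x)) -> (forall x, is_derive p1 x (- a * y1 x ^ 3)) ->
  (forall x, is_derive y2 x (p2 x)) -> (forall x, is_derive p2 x (- a * y2 x ^ 3)) ->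
  (forall x, y1 x ^ 2 <= M) -> (forall x, y2 x ^ 2 <= M) ->
  y1 x0 = y2 x0 -> p1 x0 = p2 x0 ->
  forall x, y1 x = y2 x /\ p1 x = p2 x.
Proof.
  intros Ha HM D1 D1' D2 D2' B1 B2 I1 I2.
  set (w := fun x => (y1 x - y2 x)^2 + (p1 x - p2 x)^2).
  set (dw := fun x => 2 * (y1 x - y2 x) * (p1 x - p2 x) + 2 * (p1 x - p2 x) * (- a * y1 x ^ 3 + a * y2 x ^ 3)).
  set (K := 1 + 3 * a * M).
  assert (Hw : forall x, is_derive w x (dw x)).
  { intros x. unfold w, dw. auto_derive.
    - repeat split; first [apply (exd _ _ D1) | apply (exd _ _ D2) | apply (exd _ _ D1') | apply (exd _ _ D2')].
    - rewrite (Dfun _ _ D1), (Dfun _ _ D2), (Dfun _ _ D1'), (Dfun _ _ D2'). ring. }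
  assert (Hb : forall x, dw x <= K * w x /\ - (K * w x) <= dw x).
  { intros x. unfold dw, w, K.
    set (d := y1 x - y2 x). set (e := p1 x - p2 x).
    set (Q := y1 x ^ 2 + y1 x * y2 x + y2 x ^ 2).
    assert (EQ : 2 * d * e + 2 * e * (- a * y1 x ^ 3 + a * y2 x ^ 3) = (2 * d * e) * (1 - a * Q)).
    { unfold d, e, Q. ring. }
    rewrite EQ.
    assert (HQ0 : 0 <= Q) by (unfold Q; nra).
    assert (HQ1 : Q <= 3 * M) by (unfold Q; specialize (B1 x); specialize (B2 x); nra).
    assert (HaQ0 : 0 <= a * Q) by nra.
    assert (HaQ1 : a * Q <= 3 * a * M) by nra.
    set (t := 2 * d * e). set (c := 1 - a * Q). set (W := d ^ 2 + e ^ 2).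
    assert (T1 : t <= W) by (unfold t, W; pose proof (pow2_ge_0 (d - e)); lra).
    assert (T2 : - W <= t) by (unfold t, W; pose proof (pow2_ge_0 (d + e)); lra).
    assert (C1 : c <= 1 + 3 * a * M) by (unfold c; lra).
    assert (C2 : - (1 + 3 * a * M) <= c) by (unfold c; lra).
    split; nra. }
  assert (Hw0 : w x0 = 0) by (unfold w; rewrite I1, I2; ring).
  assert (Hwpos : forall x, 0 <= w x) by (intros z; unfold w; pose proof (pow2_ge_0 (y1 z - y2 z)); pose proof (pow2_ge_0 (p1 z - p2 z)); lra).
  assert (Hz : forall x, w x = 0).
  { intros x. destruct (Rtotal_order x x0) as [Hlt | [Heq | Hgt]].
    - set (F := fun x => w x * exp (K * (x - x0))).
      set (dF := fun x => (dw x + K * w x) * exp (K * (x - x0))).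
      assert (HF : forall x, is_derive F x (dF x)).
      { intros z. unfold F, dF. auto_derive.
        - apply (exd _ _ Hw).
        - rewrite (Dfun _ _ Hw). replace (z + - x0) with (z - x0) by ring; ring. }
      destruct (mvt F dF x x0 HF Hlt) as [c [Hc Hc2]].
      assert (0 <= dF c).
      { unfold dF. apply Rmult_le_pos. specialize (Hb c). lra. left; apply exp_pos. }
      assert (F x0 = 0) by (unfold F; rewrite Hw0; ring).
      assert (F x <= 0) by nra.
      unfold F in H1. pose proof (exp_pos (K * (x - x0))). specialize (Hwpos x). nra.
    - subst; auto.
    - set (F := fun x => w x * exp (- K * (x - x0))).
      set (dF := fun x => (dw x - K * w x) * exp (- K * (x - x0))).
      assert (HF : forall x, is_derive F x (dF x)).
      { intros z. unfold F, dF. auto_derive.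
        - apply (exd _ _ Hw).
        - rewrite (Dfun _ _ Hw). replace (z + - x0) with (z - x0) by ring; ring. }
      destruct (mvt F dF x0 x HF Hgt) as [c [Hc Hc2]].
      assert (dF c <= 0).
      { unfold dF. specialize (Hb c). pose proof (exp_pos (- K * (c - x0))). nra. }
      assert (F x0 = 0) by (unfold F; rewrite Hw0; ring).
      assert (F x <= 0) by nra.
      unfold F in H1. pose proof (exp_pos (- K * (x - x0))). specialize (Hwpos x). nra. }
  intros x. specialize (Hz x). unfold w in Hz. pose proof (pow2_ge_0 (y1 x - y2 x)); pose proof (pow2_ge_0 (p1 x - p2 x)); split; apply Rminus_diag_uniq; apply (Rsqr_0_uniq); unfold Rsqr; nra.
Qed.

Definition SL (r p : R -> R) := (forall x, is_derive r x (p x)) /\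
  (forall x, is_derive p x (-2 * r x ^ 3)) /\ r 0 = 0 /\ p 0 = 1.

Lemma energy r p : SL r p -> forall x, p x ^ 2 + r x ^ 4 = 1.
Proof.
  intros [Dr [Dp [r0 p0]]].
  set (E := fun x => p x ^ 2 + r x ^ 4).
  assert (HE : forall x, is_derive E x 0).
  { intros x. unfold E. auto_derive.
    - repeat split; first [apply (exd _ _ Dp) | apply (exd _ _ Dr)].
    - rewrite (Dfun _ _ Dp), (Dfun _ _ Dr). ring. }
  assert (E0 : E 0 = 1) by (unfold E; rewrite r0, p0; ring).
  intros x. change (E x = 1).
  destruct (Rtotal_order x 0) as [H | [H | H]].
  - destruct (mvt E (fun _ => 0) x 0 HE H) as [c [_ Hc]]. lra.
  - subst; auto.
  - destruct (mvt E (fun _ => 0) 0 x HE H) as [c [_ Hc]]. lra.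
Qed.

Lemma bnd_r r p : SL r p -> forall x, r x ^ 2 <= 1.
Proof. intros H x. pose proof (energy r p H x). pose proof (pow2_ge_0 (p x)).
  pose proof (pow2_ge_0 (r x)). nra. Qed.

Lemma bnd_p r p : SL r p -> forall x, p x ^ 2 <= 1.
Proof. intros H x. pose proof (energy r p H x). pose proof (pow2_ge_0 (r x ^ 2)).
  nra. Qed.

Lemma odd_r r p : SL r p -> forall x, r (- x) = - r x /\ p (- x) = p x.
Proof.
  intros HS. pose proof HS as [Dr [Dp [r0 p0]]].
  assert (U := ode_uniq 2 4 0 (fun x => - r (- x)) (fun x => p (- x)) r p).
  intros x. destruct (U ltac:(lra) ltac:(lra)) with (x := x) as [U1 U2].
  - intros z. auto_derive. apply (exd _ _ Dr). rewrite (Dfun _ _ Dr). ring.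
  - intros z. auto_derive. apply (exd _ _ Dp). rewrite (Dfun _ _ Dp). ring.
  - exact Dr.
  - exact Dp.
  - intros z. pose proof (bnd_r r p HS (- z)). lra.
  - intros z. pose proof (bnd_r r p HS z). lra.
  - rewrite Ropp_0, r0. ring.
  - rewrite Ropp_0. auto.
  - split.
    + replace (r (- x)) with (- - r (- x)) by ring. rewrite U1. ring.
    + rewrite U2. auto.
Qed.

Lemma double_r r p : SL r p -> forall x,
  r (2 * x) = 2 * r x * p x / (1 + r x ^ 4) /\
  2 * p (2 * x) = 2 * (1 - 6 * r x ^ 4 + r x ^ 8) / (1 + r x ^ 4) ^ 2.
Proof.
  intros HS. pose proof HS as [Dr [Dp [r0 p0]]].
  pose proof (energy r p HS) as En.
  assert (Dpos : forall x, 1 <= 1 + r x ^ 4).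
  { intros x. pose proof (pow2_ge_0 (r x ^ 2)). replace (r x ^ 4) with ((r x ^ 2) ^ 2) by ring. lra. }
  assert (U := ode_uniq 8 4 0 (fun x => r (2 * x)) (fun x => 2 * p (2 * x))
     (fun x => 2 * r x * p x / (1 + r x ^ 4))
     (fun x => 2 * (1 - 6 * r x ^ 4 + r x ^ 8) / (1 + r x ^ 4) ^ 2)).
  intros x. apply U; try lra.
  - intros z. auto_derive. apply (exd _ _ Dr). rewrite (Dfun _ _ Dr). ring.
  - intros z. auto_derive. apply (exd _ _ Dp). rewrite (Dfun _ _ Dp). ring.
  - intros z. pose proof (Dpos z). auto_derive.
    + repeat split; try apply (exd _ _ Dr); try apply (exd _ _ Dp); apply Rgt_not_eq; lra.
    + rewrite (Dfun _ _ Dr), (Dfun _ _ Dp).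
      apply Rminus_diag_uniq.
      match goal with |- ?A - ?B = 0 =>
        replace (A - B) with ((p z ^ 2 - (1 - r z ^ 4)) * ((2 - 6 * r z ^ 4) / (1 + r z ^ 4) ^ 2))
      end.
      * rewrite <- (En z). ring.
      * field. apply Rgt_not_eq; lra.
  - intros z. pose proof (Dpos z). auto_derive.
    + repeat split; try apply (exd _ _ Dr); try apply (exd _ _ Dp); apply Rgt_not_eq; nra.
    + rewrite (Dfun _ _ Dr).
      apply Rminus_diag_uniq.
      match goal with |- ?A - ?B = 0 =>
        replace (A - B) with ((p z ^ 2 - (1 - r z ^ 4)) * (64 * r z ^ 3 * p z / (1 + r z ^ 4) ^ 3))
      end.
      * rewrite <- (En z). ring.
      * field. apply Rgt_not_eq; lra.
  - intros z. pose proof (bnd_r r p HS (2 * z)). lra.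
  - intros z. pose proof (Dpos z). pose proof (bnd_r r p HS z). pose proof (bnd_p r p HS z).
    set (v := 2 * r z * p z / (1 + r z ^ 4)).
    assert (Hv : v * (1 + r z ^ 4) = 2 * r z * p z) by (unfold v; field; apply Rgt_not_eq; lra).
    set (D := 1 + r z ^ 4) in *.
    assert (v ^ 2 * D ^ 2 <= 4).
    { replace (v ^ 2 * D ^ 2) with ((v * D) ^ 2) by ring. rewrite Hv.
      replace ((2 * r z * p z) ^ 2) with (4 * (r z ^ 2 * p z ^ 2)) by ring.
      pose proof (pow2_ge_0 (r z)). pose proof (pow2_ge_0 (p z)). nra. }
    clearbody v D. assert (1 <= D ^ 2) by nra. pose proof (pow2_ge_0 v). assert (0 <= v ^ 2 * (D ^ 2 - 1)) by (apply Rmult_le_pos; lra). nra.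
  - cbv beta. replace (2 * 0) with 0 by ring. rewrite r0. replace (1 + 0 ^ 4) with 1 by ring. field.
  - cbv beta. replace (2 * 0) with 0 by ring. rewrite r0, p0. replace (1 + 0 ^ 4) with 1 by ring. field.
Qed.

Lemma cont_of (f f' : R -> R) : (forall x, is_derive f x (f' x)) -> forall x, continuity_pt f x.
Proof.
  intros H x. apply continuity_pt_filterlim. apply (ex_derive_continuous (K := R_AbsRing) (V := R_NormedModule)).
  exists (f' x). apply H.
Qed.

Lemma pos_near f x : continuity_pt f x -> 0 < f x ->
  exists d, 0 < d /\ forall y, Rabs (y - x) < d -> 0 < f y.
Proof.
  intros Hc Hf. unfold continuity_pt, continue_in, limit1_in, limit_in in Hc.
  destruct (Hc (f x / 2)) as [d [Hd Hy]]; [lra|].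
  exists d. split; auto. intros y Hyx.
  destruct (Req_dec y x) as [->|Hne]; auto.
  assert (H := Hy y). simpl in H. unfold R_dist, D_x, no_cond in H.
  assert (Rabs (f y - f x) < f x / 2) by (apply H; split; auto).
  apply Rabs_def2 in H0. lra.
Qed.

Lemma exists_t0 r p : SL r p -> exists t0, 0 < t0 /\ r t0 = 1 /\ p t0 = 0 /\
  (forall y, 0 <= y < t0 -> 0 < p y).
Proof.
  intros HS. pose proof HS as [Dr [Dp [r0 p0]]].
  assert (Cp := cont_of _ _ Dp). assert (Cr := cont_of _ _ Dr).
  assert (Hx1 : exists x1, 0 < x1 /\ p x1 <= 0).
  { destruct (classic (exists x1, 0 < x1 /\ p x1 <= 0)) as [H|H]; auto. exfalso.
    assert (Hpos : forall x, 0 <= x -> 0 < p x).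
    { intros x Hx. destruct (Req_dec x 0) as [->|Hne]. lra.
      destruct (Rlt_or_le 0 (p x)) as [Hp|Hp]; auto. exfalso. apply H. exists x. split; lra. }
    destruct (mvt r p 0 1 Dr ltac:(lra)) as [c [Hc Hc2]].
    assert (Hrho : 0 < r 1) by (pose proof (Hpos c ltac:(lra)); rewrite r0 in Hc2; nra).
    set (rho := r 1) in *.
    assert (Hp1 := bnd_p r p HS 1).
    set (x := 2 + 1 / (rho ^ 3)).
    assert (Hr3 : 0 < rho ^ 3) by (apply pow_lt; lra).
    assert (Hx : 1 < x) by (unfold x; assert (0 < 1 / rho ^ 3) by (apply Rdiv_lt_0_compat; lra); lra).
    destruct (mvt p (fun x => -2 * r x ^ 3) 1 x Dp Hx) as [c' [Hc' Hc'2]].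
    destruct (mvt r p 1 c' Dr ltac:(lra)) as [c'' [Hc'' Hc''2]].
    assert (rho <= r c') by (pose proof (Hpos c'' ltac:(lra)); unfold rho; nra).
    assert (rho ^ 3 <= r c' ^ 3) by (apply pow_incr; lra).
    assert (p x <= p 1 - 2 * rho ^ 3 * (x - 1)) by nra.
    assert (2 * rho ^ 3 * (x - 1) = 2 * rho ^ 3 + 2) by (unfold x; field; lra).
    pose proof (Hpos x ltac:(lra)). assert (p 1 <= 1) by nra. lra. }
  destruct Hx1 as [x1 [Hx1 Hpx1]].
  set (E := fun t => 0 <= t /\ forall y, 0 <= y <= t -> 0 < p y).
  assert (Hb : bound E).
  { exists x1. intros t [Ht Hy]. destruct (Rle_or_lt t x1); auto.
    pose proof (Hy x1 ltac:(lra)). lra. }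
  assert (He : exists t, E t).
  { exists 0. split; [lra|]. intros y Hy. replace y with 0 by lra. lra. }
  destruct (completeness E Hb He) as [t0 [Hub Hlub]].
  assert (C1 : forall y, 0 <= y < t0 -> 0 < p y).
  { intros y Hy. destruct (Rlt_or_le 0 (p y)) as [Hp|Hp]; auto. exfalso.
    assert (is_upper_bound E y).
    { intros t [Ht Hty]. destruct (Rle_or_lt t y); auto. pose proof (Hty y ltac:(lra)). lra. }
    pose proof (Hlub y H). lra. }
  assert (C2 : 0 < t0).
  { destruct (pos_near p 0 (Cp 0) ltac:(lra)) as [d [Hd Hn]].
    assert (E (d / 2)).
    { split; [lra|]. intros y Hy. apply Hn. rewrite Rminus_0_r, Rabs_right; lra. }
    pose proof (Hub _ H). lra. }
  assert (C3 : p t0 = 0).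
  { destruct (Rtotal_order (p t0) 0) as [Hn | [Hz | Hp]]; auto; exfalso.
    - assert (Cn : continuity_pt (fun y => - p y) t0) by (apply continuity_pt_opp; auto).
      destruct (pos_near _ t0 Cn ltac:(lra)) as [d [Hd Hn']].
      set (y := t0 - Rmin d t0 / 2).
      assert (Hm1 : 0 < Rmin d t0) by (apply Rmin_glb_lt; lra).
      assert (Hm2 : Rmin d t0 <= d) by apply Rmin_l.
      assert (Hm3 : Rmin d t0 <= t0) by apply Rmin_r.
      pose proof (C1 y ltac:(unfold y; lra)).
      assert (0 < - p y) by (apply Hn'; unfold y; rewrite Rabs_left; lra). lra.
    - destruct (pos_near p t0 (Cp t0) Hp) as [d [Hd Hn]].
      assert (E (t0 + d / 2)).
      { split; [lra|]. intros y Hy. destruct (Rlt_or_le y t0). apply C1; lra.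
        apply Hn. rewrite Rabs_right; lra. }
      pose proof (Hub _ H). lra. }
  exists t0. split; auto. split; [|split; auto].
  pose proof (energy r p HS t0) as En. rewrite C3 in En.
  destruct (mvt r p 0 t0 Dr C2) as [c [Hc Hc2]].
  pose proof (C1 c ltac:(lra)). rewrite r0 in Hc2.
  assert (0 < r t0) by nra.
  assert ((r t0 - 1) * ((r t0 + 1) * (r t0 ^ 2 + 1)) = 0) by (ring_simplify; lra).
  apply Rmult_integral in H1. destruct H1; [lra|].
  assert (0 < (r t0 + 1) * (r t0 ^ 2 + 1)) by (apply Rmult_lt_0_compat; nra). lra.
Qed.

Lemma shape r p t0 : SL r p -> 0 < t0 -> r t0 = 1 -> p t0 = 0 ->
  (forall y, 0 <= y < t0 -> 0 < p y) ->
  (forall m : Z, forall x, p (x + 4 * IZR m * t0) = p x) /\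
  (forall x, p (x + 2 * t0) = - p x) /\
  (forall x, - t0 <= x <= t0 -> 0 <= p x).
Proof.
  intros HS Ht0 Hr1 Hp0 C1. pose proof HS as [Dr [Dp [r0 p0]]].
  assert (Refl : forall x, r (2 * t0 - x) = r x /\ - p (2 * t0 - x) = p x).
  { intros x. apply (ode_uniq 2 4 t0 (fun x => r (2 * t0 - x)) (fun x => - p (2 * t0 - x)) r p); try lra.
    - intros z. auto_derive. apply (exd _ _ Dr). rewrite (Dfun _ _ Dr). unfold Rminus; ring.
    - intros z. auto_derive. apply (exd _ _ Dp). rewrite (Dfun _ _ Dp). unfold Rminus; ring.
    - exact Dr.
    - exact Dp.
    - intros z. pose proof (bnd_r r p HS (2 * t0 - z)). lra.
    - intros z. pose proof (bnd_r r p HS z). lra.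
    - replace (2 * t0 - t0) with t0 by ring. auto.
    - replace (2 * t0 - t0) with t0 by ring. rewrite Hp0. ring. }
  assert (P2' : forall x, p (x + 2 * t0) = - p x).
  { intros x. destruct (Refl (- x)) as [_ H]. replace (2 * t0 - - x) with (x + 2 * t0) in H by ring.
    destruct (odd_r r p HS x) as [_ H2]. lra. }
  assert (P4' : forall x, p (x + 4 * t0) = p x).
  { intros x. replace (x + 4 * t0) with ((x + 2 * t0) + 2 * t0) by ring. rewrite !P2'. ring. }
  assert (Pn : forall n : nat, forall x, p (x + 4 * INR n * t0) = p x).
  { induction n; intros x.
    - simpl. f_equal. ring.
    - rewrite S_INR. replace (x + 4 * (INR n + 1) * t0) with ((x + 4 * INR n * t0) + 4 * t0) by ring.
      rewrite P4'. apply IHn. }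
  split; [|split; auto].
  - intros m x. destruct (Z_le_gt_dec 0 m) as [Hm|Hm].
    + rewrite <- (Z2Nat.id m Hm). rewrite <- INR_IZR_INZ. apply Pn.
    + assert (Hm' : (0 <= - m)%Z) by lia.
      pose proof (Z2Nat.id _ Hm') as E.
      assert (IZR m = - INR (Z.to_nat (- m))) by (rewrite INR_IZR_INZ, E, opp_IZR; ring).
      rewrite H. set (n := Z.to_nat (- m)).
      rewrite <- (Pn n (x + 4 * - INR n * t0)). f_equal. ring.
  - intros x Hx. destruct (Rle_or_lt 0 x).
    + destruct (Rlt_or_le x t0). left; apply C1; lra. replace x with t0 by lra. lra.
    + destruct (odd_r r p HS (- x)) as [_ H2]. rewrite Ropp_involutive in H2. rewrite H2.
      destruct (Rlt_or_le (- x) t0). left; apply C1; lra. replace (- x) with t0 by lra. lra.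
Qed.

Definition fint (t : R) : R := / sqrt (1 - t ^ 4).

Lemma cont_fint y : -1 < y < 1 -> continuous fint y.
Proof.
  intros Hy. apply (ex_derive_continuous (K := R_AbsRing) (V := R_NormedModule)).
  unfold fint. assert (0 < 1 - y ^ 4).
  { assert (y ^ 2 < 1) by nra. pose proof (pow2_ge_0 y). nra. }
  auto_derive. split; [lra|]. split; [|auto]. apply Rgt_not_eq. apply sqrt_lt_R0. lra.
Qed.

Lemma integral_t0 r p t0 : SL r p -> 0 < t0 -> r t0 = 1 -> p t0 = 0 ->
  (forall y, 0 <= y < t0 -> 0 < p y) ->
  is_RInt_gen fint (at_point 0) (at_left 1) t0.
Proof.
  intros HS Ht0 Hr1 Hp0 C1. pose proof HS as [Dr [Dp [r0 p0]]].
  assert (Cp := cont_of _ _ Dp). assert (Cr := cont_of _ _ Dr).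
  assert (Inc : forall a b, 0 <= a < b -> b <= t0 -> r a < r b).
  { intros a b Hab Hb. destruct (mvt r p a b Dr ltac:(lra)) as [c [Hc Hc2]].
    pose proof (C1 c ltac:(lra)). nra. }
  assert (Rng : forall b, 0 <= b < t0 -> 0 <= r b < 1).
  { intros b Hb. split.
    - destruct (Req_dec b 0) as [->|]; [lra|]. rewrite <- r0. left; apply Inc; lra.
    - rewrite <- Hr1. apply Inc; lra. }
  assert (Ib : forall b, 0 <= b < t0 -> is_RInt fint 0 (r b) b).
  { intros b Hb.
    assert (Hc : forall x, Rmin 0 b <= x <= Rmax 0 b -> continuous fint (r x)).
    { intros x Hx. rewrite Rmin_left, Rmax_right in Hx by lra.
      apply cont_fint. pose proof (Rng x ltac:(lra)). lra. }
    assert (Hd : forall x, Rmin 0 b <= x <= Rmax 0 b -> is_derive r x (p x) /\ continuous p x).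
    { intros x _. split; auto. apply continuity_pt_filterlim. apply Cp. }
    pose proof (is_RInt_comp fint r p 0 b Hc Hd) as H1.
    assert (H2 : is_RInt (fun y => scal (p y) (fint (r y))) 0 b b).
    { apply (is_RInt_ext (fun _ => 1)).
      - intros x Hx. rewrite Rmin_left, Rmax_right in Hx by lra.
        pose proof (C1 x ltac:(lra)) as Hpx. pose proof (energy r p HS x) as En.
        unfold fint. replace (1 - r x ^ 4) with (p x ^ 2) by lra.
        rewrite sqrt_pow2 by lra. change (scal (p x) (/ p x)) with (p x * / p x).
        symmetry. apply Rinv_r. apply Rgt_not_eq. lra.
      - pose proof (is_RInt_const (V := R_NormedModule) 0 b 1) as Hk.
        assert (Hs : scal (b - 0) (1 : R_NormedModule) = b).
        { change (@eq R ((b - 0) * 1) b). ring. }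
        rewrite Hs in Hk. exact Hk. }
    pose proof (is_RInt_unique _ _ _ _ H1) as E1.
    pose proof (is_RInt_unique _ _ _ _ H2) as E2.
    rewrite r0 in E1.
    assert (RInt fint 0 (r b) = b) by (rewrite <- E1; exact E2).
    assert (Hx : is_RInt fint 0 (r b) (RInt fint 0 (r b))).
    { apply (RInt_correct (V := R_CompleteNormedModule)). apply (ex_RInt_continuous (V := R_CompleteNormedModule)).
      intros z Hz. pose proof (Rng b Hb). rewrite Rmin_left, Rmax_right in Hz by lra.
      apply cont_fint. lra. }
    rewrite H in Hx. exact Hx. }
  unfold is_RInt_gen, filterlimi, filter_le, filtermapi.
  intros P [eps Heps].
  set (b0 := Rmax 0 (t0 - eps / 2)).
  assert (Hb0 : 0 <= b0 < t0).
  { unfold b0. split. apply Rmax_l. apply Rmax_lub_lt. lra. destruct eps; simpl; lra. }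
  assert (Hb0' : t0 - eps / 2 <= b0) by apply Rmax_r.
  pose proof (Rng b0 Hb0) as Hc0.
  set (c0 := r b0) in *.
  apply Filter_prod with (Q := fun a => a = 0) (R := fun c => c0 < c < 1).
  - reflexivity.
  - assert (Hpos : 0 < 1 - c0) by lra.
    exists (mkposreal _ Hpos). intros y Hy Hy1. simpl in Hy.
    unfold ball in Hy; simpl in Hy; unfold AbsRing_ball, abs, minus, plus, opp in Hy; simpl in Hy.
    apply Rabs_def2 in Hy. lra.
  - intros a c Ha [Hc1 Hc2]. simpl. subst a.
    assert (Hcont : continuity r) by (intros x; apply Cr).
    assert (Hy : Rmin (r b0) (r t0) <= c <= Rmax (r b0) (r t0)).
    { rewrite Rmin_left, Rmax_right; fold c0; lra. }
    destruct (IVT_gen r b0 t0 c Hcont Hy) as [b [Hb Hrb]].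
    rewrite Rmin_left, Rmax_right in Hb by lra.
    assert (b <> t0) by (intros ->; lra).
    exists b. split.
    + rewrite <- Hrb. apply Ib. lra.
    + apply Heps. unfold ball; simpl; unfold AbsRing_ball, abs, minus, plus, opp; simpl.
      apply Rabs_def1; destruct eps; simpl in *; lra.
Qed.

Lemma pi2_val r p t0 : SL r p -> 0 < t0 -> r t0 = 1 -> p t0 = 0 ->
  (forall y, 0 <= y < t0 -> 0 < p y) ->
  2 * RInt_gen (fun t : R => / sqrt (1 - t ^ (2 * 2))) (at_point 0) (at_left 1) = 2 * t0.
Proof.
  intros. change (fun t : R => / sqrt (1 - t ^ (2 * 2))) with fint.
  rewrite (is_RInt_gen_unique fint t0); auto.
  apply (integral_t0 r p); auto.
Qed.

Lemma sqrt_is a b : 0 <= b -> a = b ^ 2 -> sqrt a = b.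
Proof. intros Hb ->. apply sqrt_pow2. auto. Qed.

Lemma alg X s : 0 < X < 1 -> s ^ 2 = 4 * X * (1 - X ^ 2) / (1 + X ^ 2) ^ 2 ->
  (0 <= X ^ 2 + 2 * X - 1 ->
     X = (-1 - sqrt (1 - s ^ 2)) / s ^ 2
       + sqrt (1 + s ^ 2) / s ^ 2 * sqrt (2 - s ^ 2 + 2 * sqrt (1 - s ^ 2))) /\
  (X ^ 2 + 2 * X - 1 <= 0 ->
     X = (-1 + sqrt (1 - s ^ 2)) / s ^ 2
       + sqrt (1 + s ^ 2) / s ^ 2 * sqrt (2 - s ^ 2 - 2 * sqrt (1 - s ^ 2))).
Proof.
  intros HX Hs2.
  assert (HD : 0 < 1 + X ^ 2) by nra.
  assert (HN : 0 < 4 * X * (1 - X ^ 2)) by (assert (0 < 1 - X ^ 2) by nra; nra).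
  assert (HS : sqrt (1 + s ^ 2) = (1 + 2 * X - X ^ 2) / (1 + X ^ 2)).
  { apply sqrt_is.
    - apply Rdiv_le_0_compat; nra.
    - rewrite Hs2. field. apply Rgt_not_eq; lra. }
  rewrite HS. split; intros Hsg.
  - set (c := (X ^ 2 + 2 * X - 1) / (1 + X ^ 2)).
    assert (Hc0 : 0 <= c) by (apply Rdiv_le_0_compat; lra).
    assert (Hc : sqrt (1 - s ^ 2) = c).
    { apply sqrt_is; auto. rewrite Hs2. unfold c. field. apply Rgt_not_eq; lra. }
    rewrite Hc.
    assert (Hc' : sqrt (2 - s ^ 2 + 2 * c) = 1 + c).
    { apply sqrt_is; [lra|]. rewrite Hs2. unfold c. field. apply Rgt_not_eq; lra. }
    rewrite Hc'. rewrite Hs2. unfold c. field. repeat split; apply Rgt_not_eq; nra.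
  - set (c := (1 - 2 * X - X ^ 2) / (1 + X ^ 2)).
    assert (Hc0 : 0 <= c) by (apply Rdiv_le_0_compat; lra).
    assert (Hc1e : 1 - c = 2 * X * (X + 1) / (1 + X ^ 2)) by (unfold c; field; apply Rgt_not_eq; lra).
    assert (Hc1 : c <= 1) by (assert (0 <= 2 * X * (X + 1) / (1 + X ^ 2)) by (apply Rdiv_le_0_compat; nra); lra).
    assert (Hc : sqrt (1 - s ^ 2) = c).
    { apply sqrt_is; auto. rewrite Hs2. unfold c. field. apply Rgt_not_eq; lra. }
    rewrite Hc.
    assert (Hc' : sqrt (2 - s ^ 2 - 2 * c) = 1 - c).
    { apply sqrt_is; [lra|]. rewrite Hs2. unfold c. field. apply Rgt_not_eq; lra. }
    rewrite Hc'. rewrite Hs2. unfold c. field. repeat split; apply Rgt_not_eq; nra.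
Qed.
Theorem mainTheorem12 :
  forall (sleaf2 : R -> R), is_sleaf 2 sleaf2 ->
  forall (m : Z) (l : R), sleaf2 l <> 0 ->
  let s := sleaf2 l in
  (pi_n 2 / 2 * (4 * IZR m + 1) <= l <= pi_n 2 / 2 * (4 * IZR m + 3) ->
     (sleaf2 (l / 2)) ^ 2 =
       (-1 - sqrt (1 - s ^ 2)) / s ^ 2
       + sqrt (1 + s ^ 2) / s ^ 2 * sqrt (2 - s ^ 2 + 2 * sqrt (1 - s ^ 2))) /\
  (pi_n 2 / 2 * (4 * IZR m - 1) <= l <= pi_n 2 / 2 * (4 * IZR m + 1) ->
     (sleaf2 (l / 2)) ^ 2 =
       (-1 + sqrt (1 - s ^ 2)) / s ^ 2
       + sqrt (1 + s ^ 2) / s ^ 2 * sqrt (2 - s ^ 2 - 2 * sqrt (1 - s ^ 2))).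
Proof.
  intros sleaf2 [p [Dr [Dp [r0 p0]]]] m l Hl s. subst s.
  assert (HS : SL sleaf2 p).
  { split; [exact Dr|]. split; [|split; auto]. intros x.
    replace (-2 * sleaf2 x ^ 3) with (- INR 2 * sleaf2 x ^ (2 * 2 - 1)) by (simpl; ring). apply Dp. }
  destruct (exists_t0 _ _ HS) as [t0 [Ht0 [Hr1 [Hp0 C1]]]].
  destruct (shape _ _ t0 HS Ht0 Hr1 Hp0 C1) as [Per [Half Sgn]].
  assert (Hpi : pi_n 2 / 2 = t0).
  { unfold pi_n. rewrite (pi2_val sleaf2 p t0); auto. field. }
  rewrite Hpi.
  destruct (double_r _ _ HS (l / 2)) as [Hd1 Hd2].
  replace (2 * (l / 2)) with l in Hd1, Hd2 by field.
  pose proof (energy _ _ HS (l / 2)) as En.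
  set (u := sleaf2 (l / 2)) in *. set (P := p (l / 2)) in *.
  assert (HD : 0 < 1 + u ^ 4) by (pose proof (pow2_ge_0 (u ^ 2)); nra).
  assert (Hu : u <> 0) by (intros Hu0; apply Hl; rewrite Hd1, Hu0; field; apply Rgt_not_eq; lra).
  assert (HP : P <> 0) by (intros HP0; apply Hl; rewrite Hd1, HP0; field; apply Rgt_not_eq; lra).
  assert (HX0 : 0 < u ^ 2) by (apply pow2_gt_0 in Hu; lra).
  assert (HX1 : u ^ 2 < 1).
  { assert (0 < P ^ 2) by (apply pow2_gt_0 in HP; lra). nra. }
  assert (Hs2 : sleaf2 l ^ 2 = 4 * u ^ 2 * (1 - (u ^ 2) ^ 2) / (1 + (u ^ 2) ^ 2) ^ 2).
  { rewrite Hd1. replace ((u ^ 2) ^ 2) with (u ^ 4) by ring. replace (1 - u ^ 4) with (P ^ 2) by lra.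
    field. apply Rgt_not_eq; lra. }
  assert (Hpl : p l * (1 + u ^ 4) ^ 2 = ((u ^ 2) ^ 2 + 2 * u ^ 2 - 1) * ((u ^ 2) ^ 2 - 2 * u ^ 2 - 1)).
  { assert (p l = (1 - 6 * u ^ 4 + u ^ 8) / (1 + u ^ 4) ^ 2) by lra.
    rewrite H. field. apply Rgt_not_eq; lra. }
  assert (Hneg : (u ^ 2) ^ 2 - 2 * u ^ 2 - 1 < 0) by nra.
  assert (HD2 : 0 < (1 + u ^ 4) ^ 2) by nra.
  destruct (alg (u ^ 2) (sleaf2 l) (conj HX0 HX1) Hs2) as [A1 A2].
  split; intros Hrange.
  - apply A1.
    set (x := l - 4 * IZR m * t0 - 2 * t0).
    assert (Hx : - t0 <= x <= t0) by (unfold x; nra).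
    assert (p l = - p x).
    { rewrite <- Half. rewrite <- (Per m (x + 2 * t0)). f_equal. unfold x. ring. }
    pose proof (Sgn x Hx).
    destruct (Rle_or_lt 0 ((u ^ 2) ^ 2 + 2 * u ^ 2 - 1)) as [Hc|Hc]; auto.
    exfalso. assert (0 < p l * (1 + u ^ 4) ^ 2) by (rewrite Hpl; nra).
    nra.
  - apply A2.
    set (x := l - 4 * IZR m * t0).
    assert (Hx : - t0 <= x <= t0) by (unfold x; nra).
    assert (p l = p x).
    { rewrite <- (Per m x). f_equal. unfold x. ring. }
    pose proof (Sgn x Hx).
    destruct (Rle_or_lt ((u ^ 2) ^ 2 + 2 * u ^ 2 - 1) 0) as [Hc|Hc]; auto.
    exfalso. assert (p l * (1 + u ^ 4) ^ 2 < 0) by (rewrite Hpl; nra).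
    nra.
Qed.
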